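(* In the setting described in the context, the discrete Lagrange multiplier $\sigma_h\in V_{nc}$ satisfies $$\sigma_h(z)\le 0\quad\text{for all } z\in\mathcal{M}_h^i,\qquad \sigma_h(z)=0\quad\text{for all } z\in\mathcal{M}_h^i \text{ with } u_h(z)>\chi(z).$$
   Context: $\Omega\subset\mathbb{R}^d$ ($1\le d\le3$) is a bounded polyhedral domain, $f\in L^2(\Omega)$, and the obstacle $\chi\in C(\bar\Omega)\cap H^1(\Omega)$ satisfies $\chi\le 0$ on $\partial\Omega$. $\mathcal{T}_h$ is a conforming shape-regular triangulation of $\Omega$ into closed triangles; $|T|$ is the area of $T$; $\mathcal{M}_h$ is the set of all edge midpoints, $\mathcal{M}_h^i$ the set of midpoints of interior edges, $\mathcal{V}_h^i$ the set of interior vertices, $\mathcal{M}_T$ the set of the three edge midpoints of $T$. $V_h=\{v\in H^1_0(\Omega): v|_T\in\mathbb{P}_2(T)\ \forall T\}$ with nodal basis $\{\psi_z: z\in\mathcal{V}_h^i\cup\mathcal{M}_h^i\}$. $V_{nc}$ is the Crouzeix–Raviart space (piecewise affine functions continuous at interior edge midpoints and vanishing at boundary edge midpoints). For $v\in V_{nc}$, $\Pi_hv:=\sum_{z\in\mathcal{M}_h^i}v(z)\psi_z\in V_h$. Let $a(v,w)=(\nabla v,\nabla w)$ (with $(\cdot,\cdot)$ the $L^2(\Omega)$ inner product). Let $\mathcal{K}_h=\{v_h\in V_h: v_h(z)\ge\chi(z)\ \forall z\in\mathcal{M}_h\}$ and let $u_h\in\mathcal{K}_h$ be the unique solution of $a(u_h,v_h-u_h)\ge(f,v_h-u_h)$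 for all $v_h\in\mathcal{K}_h$. Define the inner product on $V_{nc}$ by $\langle w,v\rangle_h=\sum_{T\in\mathcal{T}_h}\frac{|T|}{3}\sum_{z\in\mathcal{M}_T}w(z)v(z)$, and let $\sigma_h\in V_{nc}$ be defined by $\langle\sigma_h,v_h\rangle_h=(f,\Pi_hv_h)-a(u_h,\Pi_hv_h)$ for all $v_h\in V_{nc}$. *)

(* Defs.v *)
From HB Require Import structures.
From mathcomp Require Import all_boot all_order all_algebra.
From mathcomp Require Import all_classical all_reals all_analysis.
Set Implicit Arguments.
Unset Strict Implicit.
Unset Printing Implicit Defensive.
Import Order.TTheory GRing.Theory Num.Theory.
Import numFieldNormedType.Exports.
Local Open Scope classical_set_scope.
Local Open Scope ring_scope.

Section FEM.
Variable R : realType.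

Local Notation pt := (R * R)%type.
Local Notation tri := (pt * pt * pt)%type.

Definition pcomb (l1 l2 l3 : R) (a b c : pt) : pt :=
  (l1 * a.1 + l2 * b.1 + l3 * c.1, l1 * a.2 + l2 * b.2 + l3 * c.2).

Definition verts (t : tri) : seq pt := [:: t.1.1; t.1.2; t.2].

Definition tri_set (t : tri) : set pt :=
  [set x | exists l1 l2 l3 : R, [/\ 0 <= l1, 0 <= l2, 0 <= l3,
     l1 + l2 + l3 = 1 & x = pcomb l1 l2 l3 t.1.1 t.1.2 t.2]].

Definition segment (a b : pt) : set pt :=
  [set x | exists l : R, [/\ 0 <= l, l <= 1 & x = pcomb (1 - l) l 0 a b a]].

Definition det2 (a b c : pt) : R :=
  (b.1 - a.1) * (c.2 - a.2) - (c.1 - a.1) * (b.2 - a.2).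

Definition area (t : tri) : R := `|det2 t.1.1 t.1.2 t.2| / 2.

Definition nondegenerate (t : tri) : Prop := det2 t.1.1 t.1.2 t.2 != 0.

Definition edges (t : tri) : seq (pt * pt) :=
  [:: (t.1.2, t.2); (t.2, t.1.1); (t.1.1, t.1.2)].

Definition midpt (a b : pt) : pt := ((a.1 + b.1) / 2, (a.2 + b.2) / 2).

Definition mids (t : tri) : seq pt := [seq midpt e.1 e.2 | e <- edges t].

Definition conforming (Th : seq tri) : Prop :=
  uniq Th /\ (forall t, t \in Th -> nondegenerate t) /\
  forall t t', t \in Th -> t' \in Th -> t != t' ->
    [\/ tri_set t `&` tri_set t' = set0,
        (exists v, [/\ v \in verts t, v \in verts t' &
                      tri_set t `&` tri_set t' = [set v]]) |
        (exists a b, [/\ a != b, (a \in verts t) && (a \in verts t'),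
                        (b \in verts t) && (b \in verts t') & tri_set t `&` tri_set t' = segment a b])].

Definition Omega_bar (Th : seq tri) : set pt := \bigcup_(t in [set t | t \in Th]) tri_set t.
Definition Omega (Th : seq tri) : set pt := interior (Omega_bar Th).
Definition bdry (Th : seq tri) : set pt := Omega_bar Th `\` Omega Th.

Definition Mh (Th : seq tri) : seq pt := undup (flatten (map mids Th)).

Definition int_edge (Th : seq tri) (e : pt * pt) : Prop :=
  ~ (segment e.1 e.2 `<=` bdry Th).
Definition Mhi (Th : seq tri) : seq pt :=
  undup [seq midpt e.1 e.2 | e <- flatten (map edges Th) & `[< int_edge Th e >]].

Definition is_int_vertex (Th : seq tri) (z : pt) : Prop :=
  (exists2 t, t \in Th & z \in verts t) /\ Omega Th z.

Definition is_node (Th : seq tri) (z : pt) : Prop :=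
  is_int_vertex Th z \/ z \in Mhi Th.

Definition P2 (p : pt -> R) : Prop :=
  exists a0 a1 a2 a3 a4 a5 : R, forall x : pt,
    p x = a0 + a1 * x.1 + a2 * x.2 + a3 * x.1 ^+ 2 + a4 * x.1 * x.2 + a5 * x.2 ^+ 2.
Definition P1 (p : pt -> R) : Prop :=
  exists a0 a1 a2 : R, forall x : pt, p x = a0 + a1 * x.1 + a2 * x.2.

(* V_h : continuous piecewise P2 functions vanishing on the boundary
   (for piecewise polynomials this is exactly membership in H^1_0) *)
Definition Vh (Th : seq tri) (v : pt -> R) : Prop :=
  [/\ forall t, t \in Th -> exists2 p, P2 p & forall x, tri_set t x -> v x = p x,
      {within Omega_bar Th, continuous v} &
      forall x, bdry Th x -> v x = 0].

(* Crouzeix--Raviart functions, represented by their affine pieces: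
   w t is the affine function w|_T; continuity at interior midpoints,
   vanishing at boundary midpoints *)
Definition Vnc (Th : seq tri) (w : tri -> pt -> R) : Prop :=
  [/\ forall t, t \in Th -> P1 (w t),
      forall t t' z, t \in Th -> t' \in Th -> z \in mids t -> z \in mids t' ->
        w t z = w t' z &
      forall t z, t \in Th -> z \in mids t -> z \notin Mhi Th -> w t z = 0].

Definition tri0 : tri := ((0, 0), (0, 0), (0, 0)).

Definition crval (Th : seq tri) (w : tri -> pt -> R) (z : pt) : R :=
  w (nth tri0 Th (find (fun t => z \in mids t) Th)) z.

Definition ip_h (Th : seq tri) (w v : tri -> pt -> R) : R :=
  \sum_(t <- Th) (area t / 3 * \sum_(z <- mids t) w t z * v t z).

Definition nodal_basis (Th : seq tri) (psi : pt -> pt -> R) : Prop :=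
  forall z, is_node Th z ->
    Vh Th (psi z) /\ forall y, is_node Th y -> psi z y = (y == z)%:R.

Definition Pi_h (Th : seq tri) (psi : pt -> pt -> R) (w : tri -> pt -> R) : pt -> R :=
  fun x => \sum_(z <- Mhi Th) crval Th w z * psi z x.

Definition leb2 := ((@lebesgue_measure R) \x (@lebesgue_measure R))%E.

(* partial derivatives (classical, existing a.e. for piecewise polynomials) *)
Definition dx (v : pt -> R) (x : pt) : R := derive1 (fun s => v (s, x.2)) x.1.
Definition dy (v : pt -> R) (x : pt) : R := derive1 (fun s => v (x.1, s)) x.2.

Definition a_form (Th : seq tri) (v w : pt -> R) : R :=
  Rintegral leb2 (Omega Th) (fun x => dx v x * dx w x + dy v x * dy w x).
Definition L2ip (Th : seq tri) (f v : pt -> R) : R :=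
  Rintegral leb2 (Omega Th) (fun x => f x * v x).

Definition L2 (D : set pt) (g : pt -> R) : Prop :=
  measurable_fun D g /\ leb2.-integrable D (fun x => (g x ^+ 2)%:E).

Definition pder (b : bool) (g : pt -> R) : pt -> R := if b then dx g else dy g.
Definition test_fun (D : set pt) (phi : pt -> R) : Prop :=
  (forall s : seq bool, continuous (foldr pder phi s) /\
     forall x : pt, derivable (fun r => foldr pder phi s (r, x.2)) x.1 1 /\
                    derivable (fun r => foldr pder phi s (x.1, r)) x.2 1) /\
  exists K : set pt, [/\ compact K, K `<=` D & forall x, ~ K x -> phi x = 0].

Definition H1 (D : set pt) (g : pt -> R) : Prop :=
  L2 D g /\ exists g1 g2 : pt -> R, [/\ L2 D g1, L2 D g2 &
    forall phi, test_fun D phi ->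
      Rintegral leb2 D (fun x => g x * dx phi x) = - Rintegral leb2 D (fun x => g1 x * phi x) /\
      Rintegral leb2 D (fun x => g x * dy phi x) = - Rintegral leb2 D (fun x => g2 x * phi x)].

Definition Kh (Th : seq tri) (chi : pt -> R) (v : pt -> R) : Prop :=
  Vh Th v /\ forall z, z \in Mh Th -> chi z <= v z.

End FEM.

(* Main.v *)
Require Import Defs.
From HB Require Import structures.
From mathcomp Require Import all_boot all_order all_algebra.
From mathcomp Require Import all_classical all_reals all_analysis.
From mathcomp Require Import ring lra.
Import Order.TTheory GRing.Theory Num.Theory.
Import numFieldNormedType.Exports.
Local Open Scope classical_set_scope.
Local Open Scope ring_scope.
Set Implicit Arguments.
Unset Strict Implicit.

Section H.
Variable R : realType.
Local Notation pt := (R * R)%type.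
Local Notation tri := (pt * pt * pt)%type.

Definition cr (a b c : pt) (x : pt) : R := 1 - 2 * (det2 x b c / det2 a b c).

Lemma cr_P1 (a b c : pt) : P1 (cr a b c).
Proof.
exists (1 - 2 * ((b.1 * c.2 - c.1 * b.2) / det2 a b c)),
  (- 2 * ((b.2 - c.2) / det2 a b c)), (- 2 * ((c.1 - b.1) / det2 a b c)).
move=> x; rewrite /cr; move: (det2 a b c)^-1 => iD; rewrite /det2. ring.
Qed.

Lemma det2_cyc (a b c : pt) : det2 b c a = det2 a b c.
Proof. rewrite /det2; ring. Qed.

Lemma cr_vals (a b c : pt) : det2 a b c != 0 ->
  [/\ cr a b c (midpt b c) = 1, cr a b c (midpt c a) = 0 & cr a b c (midpt a b) = 0].
Proof.
move=> hD; rewrite /cr /midpt /det2 in hD *; simpl; split.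
- have -> : (b.1 - (b.1 + c.1) / 2) * (c.2 - (b.2 + c.2) / 2) -
      (c.1 - (b.1 + c.1) / 2) * (b.2 - (b.2 + c.2) / 2) = 0 by field.
  by rewrite mul0r mulr0 subr0.
- by field.
- by field.
Qed.

Definition phi (z : pt) (t : tri) (x : pt) : R :=
  if z == midpt t.1.2 t.2 then cr t.1.1 t.1.2 t.2 x
  else if z == midpt t.2 t.1.1 then cr t.1.2 t.2 t.1.1 x
  else if z == midpt t.1.1 t.1.2 then cr t.2 t.1.1 t.1.2 x else 0.

Lemma phi_P1 (z : pt) (t : tri) : P1 (phi z t).
Proof.
rewrite /phi; case: eqP => _; first exact: cr_P1.
case: eqP => _; first exact: cr_P1.
case: eqP => _; first exact: cr_P1.
by exists 0, 0, 0 => x; rewrite !mul0r !addr0.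
Qed.

Lemma phi_mid (z y : pt) (t : tri) : Defs.nondegenerate t -> y \in mids t ->
  phi z t y = (y == z)%:R.
Proof.
case: t => [[a b] c]; rewrite /Defs.nondegenerate /mids /phi /= => hD.
have [h11 h12 h13] := (@cr_vals a b c hD).
have hD2 : det2 b c a != 0 by rewrite det2_cyc.
have [h21 h22 h23] := (@cr_vals b c a hD2).
have hD3 : det2 c a b != 0 by rewrite det2_cyc.
have [h31 h32 h33] := (@cr_vals c a b hD3).
rewrite !inE => hy.
have [yz|yz] := eqVneq y z.
  subst z.
  case: eqP => [->|n1] //.
  case: eqP => [->|n2] //.
  case: eqP => [->|n3] //.
  by case/or3P: hy => /eqP h.
case: eqP => [ez|n1].
  by rewrite ez in yz; case/or3P: hy => /eqP ey; rewrite ey ?eqxx in yz *.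
case: eqP => [ez|n2].
  by rewrite ez in yz; case/or3P: hy => /eqP ey; rewrite ey ?eqxx in yz *.
case: eqP => [ez|n3] //.
by rewrite ez in yz; case/or3P: hy => /eqP ey; rewrite ey ?eqxx in yz *.
Qed.

Lemma Mhi_mids (Th : seq tri) (y : pt) : y \in Mhi Th ->
  exists2 t, t \in Th & y \in mids t.
Proof.
rewrite mem_undup => /mapP [e]; rewrite mem_filter => /andP [_ /flatten_mapP [t tTh et]] ->.
by exists t => //; rewrite /mids; apply: (map_f (fun e => midpt e.1 e.2) et).
Qed.

Lemma Mh_cases (Th : seq tri) (y : pt) : y \in Mh Th -> y \in Mhi Th \/ bdry Th y.
Proof.
rewrite mem_undup => /flatten_mapP [t tTh]; rewrite /mids => /mapP [e et ->].
case: (pselect (int_edge Th e)) => hi.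
  left; rewrite mem_undup; apply/mapP; exists e => //; rewrite mem_filter.
  by apply/andP; split; [exact/asboolP | apply/flatten_mapP; exists t].
right; have hs : Defs.segment e.1 e.2 `<=` bdry Th by apply: contrapT.
apply: hs; exists (1/2); split.
- by rewrite divr_ge0 // ler0n.
- by rewrite ler_pdivrMr ?ltr0n // mul1r ler1n.
- by rewrite /midpt /pcomb /=; congr pair; field.
Qed.

Lemma sum_ge_term (T : eqType) (s : seq T) (F : T -> R) (x : T) :
  (forall y, y \in s -> 0 <= F y) -> x \in s -> F x <= \sum_(y <- s) F y.
Proof.
elim: s => [//|a s IH] hF; rewrite inE big_cons => /orP [/eqP ->|xs].
  by rewrite lerDl big_seq sumr_ge0 // => i hi; apply: hF; rewrite inE hi orbT.
apply: le_trans (IH _ xs) _ => [y ys|]; first by apply: hF; rewrite inE ys orbT.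
by rewrite lerDr hF // inE eqxx.
Qed.
End H.

Theorem lemma3p2 (R : realType) (Th : seq (((R*R)*(R*R)*(R*R))%type)) (f chi : (R*R)%type -> R)
  (psi : (R*R)%type -> (R*R)%type -> R) (uh : (R*R)%type -> R) (sigmah : ((R*R)*(R*R)*(R*R))%type -> (R*R)%type -> R) :
  conforming Th ->
  connected (Omega Th) ->
  L2 (Omega Th) f ->
  {within Omega_bar Th, continuous chi} ->
  H1 (Omega Th) chi ->
  (forall x, bdry Th x -> chi x <= 0) ->
  nodal_basis Th psi ->
  Kh Th chi uh ->
  (forall vh, Kh Th chi vh ->
     L2ip Th f (fun x => vh x - uh x) <= a_form Th uh (fun x => vh x - uh x)) ->
  Vnc Th sigmah ->
  (forall vh, Vnc Th vh ->
     ip_h Th sigmah vh = L2ip Th f (Pi_h Th psi vh) - a_form Th uh (Pi_h Th psi vh)) ->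
  forall z, z \in Mhi Th ->
    crval Th sigmah z <= 0 /\ (chi z < uh z -> crval Th sigmah z = 0).
Proof.
move=> [_ [hnd _]] _ _ _ _ _ hnod hKu hVI [hs1 hs2 hs3] hsig z hz.
have [[hup hucont hub] hum] := hKu.
have [[pp pc pb] hval] := hnod z (or_intror hz).
have psi_val : forall y, y \in Mh Th -> psi z y = (y == z)%:R.
  move=> y /Mh_cases [hy|hy]; first exact: hval y (or_intror hy).
  have [yz|yz] := eqVneq y z; last by rewrite pb.
  subst y; have := hval z (or_intror hz); rewrite pb // eqxx => /eqP.
  by rewrite eq_sym oner_eq0.
pose ph (k : R) := fun t x => k * phi z t x.
have Vnc_ph : forall k, Vnc Th (ph k).
  move=> k; split.
  - move=> t _; have [a0 [a1 [a2 ha]]] := phi_P1 z t.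
    by exists (k * a0), (k * a1), (k * a2) => x; rewrite /ph ha; ring.
  - by move=> t t1 y tT t1T yt yt1; rewrite /ph (phi_mid _ (hnd _ tT) yt) (phi_mid _ (hnd _ t1T) yt1).
  - move=> t y tT yt ny; rewrite /ph (phi_mid _ (hnd _ tT) yt).
    have /negbTE -> : y != z by apply: contraNneq ny => ->.
    by rewrite mulr0.
have crval_at : forall (w : (R*R)*(R*R)*(R*R) -> (R * R) -> R) y, y \in Mhi Th ->
    exists2 t, t \in Th & y \in mids t /\ crval Th w y = w t y.
  move=> w y /Mhi_mids hy.
  have hh : has (fun t => y \in mids t) Th by apply/hasP.
  exists (nth (tri0 R) Th (find (fun t => y \in mids t) Th)).
    by apply: mem_nth; rewrite -has_find.
  by split=> //; exact: (nth_find (tri0 R) hh).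
have crval_ph : forall k y, y \in Mhi Th -> crval Th (ph k) y = k * (y == z)%:R.
  move=> k y hy; have [t tT [yt ->]] := crval_at (ph k) y hy.
  by rewrite /ph (phi_mid _ (hnd _ tT) yt).
have crval_sig : forall t, t \in Th -> z \in mids t -> sigmah t z = crval Th sigmah z.
  move=> t tT zt; have [t' t'T [zt' ->]] := crval_at sigmah z hz.
  exact: hs2.
have Pi_ph : forall k, Pi_h Th psi (ph k) = (fun x => k * psi z x).
  move=> k; apply: funext => x; rewrite /Pi_h.
  rewrite (eq_big_seq (fun y => k * (y == z)%:R * psi y x)); last first.
    by move=> y hy; rewrite crval_ph.
  rewrite (bigD1_seq z) //= ?undup_uniq // big1 ?eqxx ?mulr1 ?addr0 //.
  by move=> y /negbTE ->; rewrite mulr0 mul0r.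
pose C := \sum_(t <- Th) (area t / 3 * \sum_(y <- mids t) (y == z)%:R).
have ip_ph : forall k, ip_h Th sigmah (ph k) = k * crval Th sigmah z * C.
  move=> k; rewrite /ip_h /C mulr_sumr; apply: eq_big_seq => t tT.
  rewrite mulrCA; congr (_ * _); rewrite mulr_sumr; apply: eq_big_seq => y yt.
  rewrite /ph (phi_mid _ (hnd _ tT) yt).
  have [yz|yz] := eqVneq y z; last by rewrite !mulr0.
  by subst y; rewrite crval_sig //; ring.
have Cpos : 0 < C.
  have [t0 t0T zt0] := Mhi_mids hz.
  have ht : forall t, t \in Th -> 0 <= area t / 3 * \sum_(y <- mids t) (y == z)%:R.
    by move=> t _; rewrite mulr_ge0 ?divr_ge0 ?normr_ge0 ?ler0n ?sumr_ge0.
  apply: lt_le_trans (sum_ge_term ht t0T).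
  apply: mulr_gt0.
    have hn : (0:R) < `|det2 t0.1.1 t0.1.2 t0.2| by rewrite normr_gt0; exact: hnd.
    have h2 : (0:R) < 2 by [].
    by apply: divr_gt0 => //; exact: (divr_gt0 hn h2).
  apply: lt_le_trans (sum_ge_term (F := fun y => (y == z)%:R) _ zt0) => //.
  by rewrite eqxx ltr01.
have key : forall k, Kh Th chi (fun x => uh x + k * psi z x) ->
    k * crval Th sigmah z * C <= 0.
  move=> k hK; move: (hVI _ hK) => /=.
  have -> : (fun x => uh x + k * psi z x - uh x) = (fun x => k * psi z x).
    by apply: funext => x; rewrite addrAC subrr add0r.
  by rewrite -subr_le0 -(Pi_ph k) -hsig // -ip_ph.
have Kh_shift : forall k, (forall y, y \in Mh Th -> chi y <= uh y + k * psi z y) ->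
    Kh Th chi (fun x => uh x + k * psi z x).
  move=> k hm; split=> //; split.
  - move=> t tT; have [p [a0 [a1 [a2 [a3 [a4 [a5 ha]]]]]] hp] := hup t tT.
    have [q [b0 [b1 [b2 [b3 [b4 [b5 hb]]]]]] hq] := pp t tT.
    exists (fun x => p x + k * q x).
      exists (a0 + k * b0), (a1 + k * b1), (a2 + k * b2), (a3 + k * b3),
        (a4 + k * b4), (a5 + k * b5) => x; rewrite ha hb; ring.
    by move=> x hx; rewrite hp // hq.
  - move=> x; have H := continuousD (hucont x) (continuousM (@cst_continuous _ R k x) (pc x)).
    exact: H.
  - by move=> x hx; rewrite hub // pb // mulr0 addr0.
have h1 : crval Th sigmah z * C <= 0.
  rewrite -[X in X <= _]mul1r mulrA; apply: key; apply: Kh_shift => y hy.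
  rewrite psi_val // mul1r; apply: le_trans (hum y hy) _.
  by rewrite lerDl ler0n.
split.
  by move: h1; rewrite pmulr_lle0.
move=> hlt; set e := uh z - chi z.
have h2 : (- e) * crval Th sigmah z * C <= 0.
  apply: key; apply: Kh_shift => y hy; rewrite psi_val //.
  have [->|yz] := eqVneq y z; last by rewrite mulr0 addr0 hum.
  by rewrite /e mulr1 opprB addrC subrK.
have he : 0 < e by rewrite /e subr_gt0.
apply/eqP; rewrite eq_le; apply/andP; split.
  by move: h1; rewrite pmulr_lle0.
move: h2; rewrite -mulrA mulNr oppr_le0 pmulr_rge0 //.
by rewrite pmulr_lge0.
Qed.
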